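(* For every $\beta\geq 1$, $$\lim_{\eta\to\infty}\ \sup_{t\in\mathbb{R}^+}\ \left|p_{\mathrm{W}_1}(t\mid\beta,\eta)-f_{\mathrm{W}}(t\mid\beta,\eta)\right|=0.$$
   Context: For $\eta>0$, $\beta>0$, $f_{\mathrm{W}}(t\mid\beta,\eta)=\frac{\beta}{\eta}\left(\frac{t}{\eta}\right)^{\beta-1}\exp[-(t/\eta)^\beta]$ for $t>0$ (and $0$ at $t=0$ when $\beta>1$; equal to $1/\eta$ at $t=0$ when $\beta=1$) is the density of the continuous Weibull distribution $\mathrm{W}(\eta,\beta)$. The probability mass function of the Weibull-1 distribution $\mathrm{W}_1(\eta,\beta)$ is $p_{\mathrm{W}_1}(n\mid\beta,\eta)=\exp[-((n-1)/\eta)^\beta]-\exp[-(n/\eta)^\beta]=\int_{n-1}^{n}f_{\mathrm{W}}(s\mid\beta,\eta)\,ds$ for integers $n\geq1$; it is extended to real $t\geq 0$ by setting $p_{\mathrm{W}_1}(t\mid\beta,\eta)=p_{\mathrm{W}_1}(n\mid\beta,\eta)$ for $t\in(n-1,n]$ (and, say, $p_{\mathrm{W}_1}(0\mid\beta,\eta)=p_{\mathrm{W}_1}(1\mid\beta,\eta)$), as done in the paper's argument. *)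

(* Defs.v *)
From Stdlib Require Import Reals.
From Coquelicot Require Import Coquelicot.
Open Scope R_scope.

(* x ^ b for x >= 0 and b > 0, with 0 ^ b = 0 (Stdlib's Rpower 0 b = 1). *)
Definition rpow0 (x b : R) : R :=
  if Req_EM_T x 0 then 0 else Rpower x b.

Definition f_W (beta eta t : R) : R :=
  if Rlt_dec 0 t then
    beta / eta * Rpower (t / eta) (beta - 1) * exp (- Rpower (t / eta) beta)
  else if Req_EM_T beta 1 then 1 / eta else 0.

Definition p_W1_nat (beta eta : R) (n : Z) : R :=
  exp (- rpow0 ((IZR n - 1) / eta) beta) - exp (- rpow0 (IZR n / eta) beta).

(* ceiling of t: the integer n with n - 1 < t <= n *)
Definition ceilZ (t : R) : Z := (- Int_part (- t))%Z.

(* extension to real t >= 0: value at n for t in (n-1, n], and p(0) = p(1) *)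
Definition p_W1 (beta eta t : R) : R :=
  p_W1_nat beta eta (Z.max 1 (ceilZ t)).

(* Main.v *)
Require Import Defs.
From Stdlib Require Import Reals Lra Lia.
From Coquelicot Require Import Coquelicot.
Open Scope R_scope.

Lemma exp_mono x y : x <= y -> exp x <= exp y.
Proof. intros [H|H]. left; apply exp_increasing; auto. subst; lra. Qed.

Lemma key_bound b c : 1 <= b -> 0 < c ->
  0 <= Rpower c (b - 1) * exp (- Rpower c b) <= 1.
Proof.
  intros hb hc. split.
  { apply Rmult_le_pos; left; unfold Rpower; apply exp_pos. }
  assert (H1 : Rpower c (b - 1) <= 1 + Rpower c b).
  { unfold Rpower. destruct (Rle_dec (ln c) 0) as [h|h].
    - assert (exp ((b-1) * ln c) <= exp 0) by (apply exp_mono; nra).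
      rewrite exp_0 in H. pose proof (exp_pos (b * ln c)). lra.
    - assert (exp ((b-1) * ln c) <= exp (b * ln c)) by (apply exp_mono; nra). lra. }
  pose proof (exp_ineq1_le (Rpower c b)).
  assert (Hp : 0 < exp (- Rpower c b)) by apply exp_pos.
  assert (exp (Rpower c b) * exp (- Rpower c b) = 1).
  { rewrite <- exp_plus. replace (Rpower c b + - Rpower c b) with 0 by ring. apply exp_0. }
  nra.
Qed.

Lemma h_lip b x y : 1 <= b -> 0 <= x <= y ->
  Rabs (exp (- rpow0 x b) - exp (- rpow0 y b)) <= b * (y - x).
Proof.
  intros hb [hx hxy]. destruct (Req_dec x y) as [e|ne].
  { subst. rewrite Rminus_diag, Rabs_R0. lra. }
  unfold rpow0. destruct (Req_EM_T x 0) as [e0|n0].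
  - subst x. destruct (Req_EM_T y 0) as [ey|ny]; [lra|].
    rewrite Ropp_0, exp_0, Rminus_0_r.
    assert (Hy: 0 < y) by lra.
    pose proof (exp_pos (- Rpower y b)).
    assert (exp (- Rpower y b) <= 1).
    { rewrite <- exp_0. apply exp_mono. pose proof (exp_pos (b * ln y)). unfold Rpower; lra. }
    rewrite Rabs_pos_eq by lra.
    destruct (Rle_dec y 1) as [hy1|hy1].
    + pose proof (exp_ineq1_le (- Rpower y b)).
      assert (Rpower y b <= y).
      { unfold Rpower. assert (ln y <= 0).
        { rewrite <- ln_1. destruct hy1 as [h|h]. left; apply ln_increasing; lra. subst; lra. }
        replace y with (exp (1 * ln y)) at 2 by (rewrite Rmult_1_l; apply exp_ln; lra).
        apply exp_mono. nra. }
      nra.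
    + nra.
  - destruct (Req_EM_T y 0) as [ey|ny]; [lra|].
    assert (hx' : 0 < x) by lra.
    destruct (MVT_cor2 (fun z => exp (- Rpower z b))
      (fun z => exp (- Rpower z b) * (- (b * Rpower z (b - 1)))) x y) as [c [Hc1 Hc2]].
    { lra. }
    { intros c Hc. apply (derivable_pt_lim_comp (fun z => - Rpower z b) exp).
      - apply derivable_pt_lim_opp. apply derivable_pt_lim_power. lra.
      - apply derivable_pt_lim_exp. }
    simpl in Hc1.
    rewrite Rabs_minus_sym, Hc1.
    pose proof (key_bound b c hb ltac:(lra)).
    rewrite Rabs_mult, (Rabs_pos_eq (y - x)) by lra.
    apply Rmult_le_compat_r; [lra|].
    replace (exp (- Rpower c b) * - (b * Rpower c (b - 1))) with
      (- (b * (Rpower c (b - 1) * exp (- Rpower c b)))) by ring.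
    rewrite Rabs_Ropp, Rabs_pos_eq by nra.
    nra.
Qed.

Lemma p_bound b eta t : 1 <= b -> 0 < eta -> Rabs (p_W1 b eta t) <= b / eta.
Proof.
  intros hb he. unfold p_W1, p_W1_nat.
  set (n := Z.max 1 (ceilZ t)).
  assert (hn : 1 <= IZR n) by (apply IZR_le; unfold n; lia).
  replace (b / eta) with (b * (IZR n / eta - (IZR n - 1) / eta)) by (field; lra).
  apply h_lip; auto. split.
  - apply Rdiv_le_0_compat; lra.
  - unfold Rdiv; apply Rmult_le_compat_r; [left; apply Rinv_0_lt_compat|]; lra.
Qed.

Lemma f_bound b eta t : 1 <= b -> 0 < eta -> Rabs (f_W b eta t) <= b / eta.
Proof.
  intros hb he. unfold f_W. destruct (Rlt_dec 0 t) as [ht|ht].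
  - pose proof (key_bound b (t / eta) hb ltac:(apply Rdiv_lt_0_compat; lra)).
    assert (0 < b / eta) by (apply Rdiv_lt_0_compat; lra).
    rewrite Rabs_pos_eq by nra. nra.
  - assert (0 < / eta) by (apply Rinv_0_lt_compat; lra).
    destruct (Req_EM_T b 1).
    + subst. rewrite Rabs_pos_eq; unfold Rdiv; lra.
    + rewrite Rabs_R0. unfold Rdiv. nra.
Qed.

Theorem proposition3 (beta : R) (hbeta : 1 <= beta) :
  let S := fun eta => Lub_Rbar (fun y => exists t, 0 <= t /\
                  y = Rabs (p_W1 beta eta t - f_W beta eta t)) in
  (exists M, forall eta, M < eta -> is_finite (S eta)) /\
  is_lim (fun eta => real (S eta)) p_infty 0.
Proof.
  intros S.
  assert (HS : forall eta, 0 < eta -> 0 <= real (S eta) <= 2 * beta / eta /\ is_finite (S eta)).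
  { intros eta he. unfold S.
    set (E := fun y => exists t, 0 <= t /\ y = Rabs (p_W1 beta eta t - f_W beta eta t)).
    destruct (Lub_Rbar_correct E) as [Hub Hlub].
    assert (Hup : Rbar_le (Lub_Rbar E) (2 * beta / eta)).
    { apply Hlub. intros y [t [_ ->]]. simpl.
      eapply Rle_trans; [apply Rabs_triang|]. rewrite Rabs_Ropp.
      pose proof (p_bound beta eta t hbeta he). pose proof (f_bound beta eta t hbeta he).
      replace (2 * beta / eta) with (beta / eta + beta / eta) by (field; lra). lra. }
    assert (Hlo : Rbar_le 0 (Lub_Rbar E)).
    { apply (Rbar_le_trans _ (Rabs (p_W1 beta eta 0 - f_W beta eta 0))).
      simpl. apply Rabs_pos. apply Hub. exists 0. split; [lra|reflexivity]. }
    destruct (Lub_Rbar E) as [l| |]; simpl in Hup, Hlo |- *; try tauto.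
    split; [lra|reflexivity]. }
  split.
  { exists 0. intros eta he. apply HS; lra. }
  apply is_lim_spec. intros eps. simpl.
  exists (Rmax 0 (2 * beta / eps)). intros eta he.
  assert (h0 : 0 < eta) by (pose proof (Rmax_l 0 (2*beta/eps)); lra).
  assert (h1 : 2 * beta / eps < eta) by (pose proof (Rmax_r 0 (2*beta/eps)); lra).
  destruct (HS eta h0) as [[Ha Hb] _].
  rewrite Rminus_0_r, Rabs_pos_eq by lra.
  pose proof (cond_pos eps).
  assert (2 * beta < eps * eta).
  { apply (Rmult_lt_compat_r eps) in h1; auto. unfold Rdiv in h1.
    rewrite Rmult_assoc, Rinv_l, Rmult_1_r in h1; lra. }
  assert (2 * beta / eta < eps).
  { apply (Rmult_lt_reg_r eta); auto. unfold Rdiv. rewrite Rmult_assoc, Rinv_l; lra. }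
  lra.
Qed.
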